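(* Let $G$ be a perfect finite group and $\Phi:G\to\mathrm{GL}_N(\mathbb C)$ a faithful representation such that (a) $\Phi=\bigoplus_{i=1}^n\Phi_i$ with each $\Phi_i$ irreducible, and (b) each $L_i:=\Phi_i(G)$ is quasisimple with simple quotient $S_i=L_i/\mathbf Z(L_i)$. Then there is a subset $\{j_1,\dots,j_m\}\subseteq\{1,\dots,n\}$ such that $G$ is isomorphic to a central product $R_{j_1}*\cdots*R_{j_m}$ where each $R_{j_i}$ is a quasisimple cover of $S_{j_i}$. If moreover (c) $\mathrm{Tr}(\Phi(g))\ne0$ for all $g\in G$, and (d) for every quasisimple subgroup $H\le G$ and every proper subset $\mathcal X\subsetneq\{\Phi_1,\dots,\Phi_n\}$ such that $\Phi_i(H)=\Phi_i(G)$ for all $\Phi_i\in\mathcal X$, there is $h\in H$ with $\mathrm{Tr}(\Phi_i(h))=0$ for all $\Phi_i\in\mathcal X$, then $G$ is quasisimple. *)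

(* Defs.v *)
From HB Require Import structures.
From mathcomp Require Import all_boot all_order all_algebra all_fingroup all_solvable all_field all_character.
Set Implicit Arguments. Unset Strict Implicit. Unset Printing Implicit Defensive.
Local Open Scope group_scope.

Definition perfect (gT : finGroupType) (G : {set gT}) : bool := [~: G, G] == G.

(* Quasisimple: perfect, and G / Z(G) is (nonabelian) simple.
   (MathComp's [simple] includes non-triviality.) *)
Definition quasisimple (gT : finGroupType) (G : {set gT}) : bool :=
  perfect G && simple (G / 'Z(G)).

(* Main.v *)
Require Import Defs.
From HB Require Import structures.
From mathcomp Require Import all_boot all_order all_algebra all_fingroup all_solvable all_field all_character.
Set Implicit Arguments. Unset Strict Implicit. Unset Printing Implicit Defensive.
Import GRing.Theory.

Section GT.
Local Open Scope group_scope.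
Variable gT : finGroupType.
Implicit Types (L A B W M H : {group gT}).

Lemma perfect_sub L A B W : [~: L, L] = L -> W <| L -> A \subset L -> B \subset L ->
  L \subset A * W -> L \subset B * W -> [~: A, B] \subset W -> L \subset W.
Proof.
move=> pL nWL sAL sBL sLA sLB sABW.
have nW := normal_norm nWL.
have nAW := subset_trans sAL nW; have nBW := subset_trans sBL nW.
rewrite -quotient_sub1 //.
have eA : L / W \subset A / W by rewrite -(quotientMidr W A) quotientS.
have eB : L / W \subset B / W by rewrite -(quotientMidr W B) quotientS.
rewrite -{1}pL quotientR // (subset_trans (commgSS eA eB)) //.
by rewrite -quotientR // -(trivg_quotient W) quotientS.
Qed.

Lemma qs_normal L H : quasisimple L -> H <| L -> H :=: L \/ H \subset 'Z(L).
Proof.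
case/andP=> /eqP pL /simpleP[_ sL] nHL.
have nZL := center_normal L.
have nZ := normal_norm nZL.
have sHL := normal_sub nHL.
have nHZ := subset_trans sHL nZ.
have := sL (H / 'Z(L))%G (quotient_normal _ nHL).
case=> [H1|HL].
  have H1' : H / 'Z(L) = 1 := H1.
  by right; rewrite -quotient_sub1 // H1'.
have HL' : H / 'Z(L) = L / 'Z(L) := HL.
left; apply/eqP; rewrite eqEsubset sHL /=.
apply: (perfect_sub (A := 'Z(L)) (B := L)) => //.
- exact: center_sub.
- by rewrite -quotientK // HL' quotientGK.
- exact: mulG_subl.
- have cZL : 'Z(L) \subset 'C(L) by exact: subsetIr.
  by rewrite (commG1P cZL) sub1G.
Qed.
End GT.

Section Decomp.
Local Open Scope group_scope.
Variables (gT : finGroupType) (G : {group gT}) (n : nat) (K : 'I_n -> {group gT}).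
Hypothesis perfG : [~: G, G] = G.
Hypothesis nKG : forall i, K i <| G.
Hypothesis faithK : forall x, x \in G -> (forall i, x \in K i) -> x = 1.
Hypothesis qsK : forall i, quasisimple (G / K i).

Definition Zc i : {group gT} := (coset (K i) @*^-1 'Z(G / K i))%G.

Let nKG' i : G \subset 'N(K i) := normal_norm (nKG i).
Let sKG i : K i \subset G := normal_sub (nKG i).

Lemma sKZ i : K i \subset Zc i.
Proof. by rewrite -sub_quotient_pre ?normG // trivg_quotient sub1G. Qed.

Lemma sZG i : Zc i \subset G.
Proof. by rewrite -{1}(quotientGK (nKG i)) morphpreS // center_sub. Qed.

Lemma nZG i : Zc i <| G.
Proof.
rewrite -{1}(quotientGK (nKG i)) morphpre_normal ?center_normal //.
  exact: subset_trans (center_sub _) (quotientS _ (nKG' i)).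
exact: quotientS _ (nKG' i).
Qed.

Lemma commZ i : [~: Zc i, G] \subset K i.
Proof.
rewrite -quotient_cents2 ?(subset_trans (sZG i)) ?nKG' // cosetpreK.
exact: subsetIr.
Qed.

Lemma qsN i (M : {group gT}) : M <| G -> G \subset M * K i \/ M \subset Zc i.
Proof.
move=> nMG; have sMG := normal_sub nMG.
have nMK := subset_trans sMG (nKG' i).
have := qs_normal (qsK i) (H := (M / K i)%G) (quotient_normal _ nMG).
case=> [e|s].
  left; rewrite -{1}(quotientGK (nKG i)).
  have e' : M / K i = G / K i := e.
  by rewrite -e' quotientK // (normC nMK).
by right; rewrite -sub_quotient_pre.
Qed.

Lemma ZneG i : ~~ (G \subset Zc i).
Proof.
apply/negP => sGZ.
have sGK : G \subset K i.
  apply: (perfect_sub (A := Zc i) (B := Zc i)) => //; try exact: sZG.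
  - exact: subset_trans sGZ (mulG_subl _ _).
  - exact: subset_trans sGZ (mulG_subl _ _).
  - exact: subset_trans (commgS _ (sZG i)) (commZ i).
case/andP: (qsK i) => _ /simpleP[nt _].
have s1 : G / K i \subset 'Z(G / K i) by rewrite (quotientS1 sGK) sub1G.
by move: nt; rewrite /= (quotientS1 s1) eqxx.
Qed.

Lemma sep i i' (A : {group gT}) : Zc i != Zc i' -> A <| G ->
  G \subset A * K i -> G \subset (A :&: K i') * K i.
Proof.
move=> neq nAG sGA.
have [//|sAKZ] := qsN i (normalI nAG (nKG i')).
exfalso.
have sAG := normal_sub nAG.
have [sGKK | sKZ'] := qsN i (nKG i').
  apply: (negP (ZneG i)).
  apply: (perfect_sub (A := A) (B := K i')) => //.
  - exact: nZG.
  - exact: subset_trans sGA (mulgS _ (sKZ i)).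
  - exact: subset_trans sGKK (mulgS _ (sKZ i)).
  - apply: subset_trans sAKZ.
    apply: commg_subI; rewrite subsetI subxx.
      exact: subset_trans sAG (nKG' i').
    exact: subset_trans (sKG i') (normal_norm nAG).
have [sGZK | sZZ'] := qsN i' (nZG i).
  by apply: (negP (ZneG i)); rewrite mulGSid in sGZK.
have [sGZK2 | sZ'Z] := qsN i (nZG i').
  apply: (negP (ZneG i')).
  by rewrite mulGSid in sGZK2 => //; exact: subset_trans (sKZ i) sZZ'.
have e : gval (Zc i) = Zc i' by apply/eqP; rewrite eqEsubset sZZ'.
by rewrite (group_inj e) eqxx in neq.
Qed.


Definition Rc j : {group gT} := (G :&: \bigcap_(i | Zc i != Zc j) K i)%G.
Definition Bc j : {group gT} := (G :&: \bigcap_(i | Zc i == Zc j) K i)%G.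

Lemma capN (P : pred 'I_n) : G :&: \bigcap_(i | P i) K i <| G.
Proof.
rewrite /normal subsetIl normsI ?normG // norms_bigcap //.
by apply/bigcapsP=> i _; exact: nKG'.
Qed.

Lemma R_normal j : Rc j <| G. Proof. exact: capN. Qed.
Lemma B_normal j : Bc j <| G. Proof. exact: capN. Qed.
Lemma sRG j : Rc j \subset G. Proof. exact: subsetIl. Qed.

Lemma sRK j i : Zc i != Zc j -> Rc j \subset K i.
Proof. by move=> h; apply: subset_trans (subsetIr _ _) _; apply: bigcap_inf. Qed.

Lemma sBK j i : Zc i = Zc j -> Bc j \subset K i.
Proof.
move=> h; have h' : Zc i == Zc j by rewrite h.
by apply: subset_trans (subsetIr _ _) _; apply: bigcap_inf.
Qed.

Lemma RB1 j x : x \in Rc j -> x \in Bc j -> x = 1.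
Proof.
move=> Rx Bx; apply: faithK; first exact: (subsetP (sRG j)).
move=> i; case: (eqVneq (Zc i) (Zc j)) => h.
  exact: (subsetP (sBK h)).
exact: (subsetP (sRK h)).
Qed.

Lemma RR1 j k x : Zc j != Zc k -> x \in Rc j -> x \in Rc k -> x = 1.
Proof.
move=> neq Rx Rx'; apply: faithK; first exact: (subsetP (sRG j)).
move=> i; case: (eqVneq (Zc i) (Zc j)) => h.
  by apply: (subsetP (sRK (j := k) _)) => //; rewrite h.
exact: (subsetP (sRK h)).
Qed.

Lemma capK_surj i (P : pred 'I_n) : (forall i', P i' -> Zc i' != Zc i) ->
  G \subset (G :&: \bigcap_(i' | P i') K i') * K i.
Proof.
move=> hP.
pose Inv (X : {set gT}) := exists2 H : {group gT}, X = H &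
   (G \subset 'N(H)) /\ G \subset (G :&: H) * K i.
suff [H -> [_ //]] : Inv (\bigcap_(i' | P i') K i').
apply: (big_rec Inv).
  exists [set: gT]%G => //; split; first by rewrite normT subsetT.
  by rewrite setIT mulG_subl.
move=> i' X Pi' [H -> [nH sH]].
exists (K i' :&: H)%G => //; split; first by rewrite normsI.
have e : G :&: (K i' :&: H) = (G :&: H) :&: K i' by rewrite setICA setIC.
rewrite e.
have nGH : (G :&: H)%G <| G by rewrite /normal subsetIl normsI ?normG.
by apply: (sep (A := (G :&: H)%G)) => //; rewrite eq_sym hP.
Qed.

Lemma R_surj j i : Zc i = Zc j -> G \subset Rc j * K i.
Proof. by move=> h; apply: capK_surj => i'; rewrite h. Qed.

Lemma perf_split j (M : {group gT}) : M <| G -> G \subset M * K j ->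
  G \subset M * Bc j.
Proof.
move=> nMG sGM.
have nBM : Bc j \subset 'N(M) := subset_trans (normal_sub (B_normal j)) (normal_norm nMG).
rewrite -norm_joinEr //.
have nWG : (M <*> Bc j)%G <| G by apply: normalY => //; exact: B_normal.
apply: (perfect_sub (A := Zc j) (B := Zc j)) => //; try exact: sZG.
- rewrite -(normC (subset_trans (normal_sub nWG) (normal_norm (nZG j)))).
  apply: subset_trans sGM _; apply: mulgSS; first exact: joing_subl.
  exact: sKZ.
- rewrite -(normC (subset_trans (normal_sub nWG) (normal_norm (nZG j)))).
  apply: subset_trans sGM _; apply: mulgSS; first exact: joing_subl.
  exact: sKZ.
- apply: subset_trans (joing_subr _ _); rewrite subsetI; apply/andP; split.
    by rewrite -{1}perfG commgSS ?sZG.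
  apply/bigcapsP => i /eqP h; rewrite -h.
  exact: subset_trans (commgS _ (sZG i)) (commZ i).
Qed.

Definition J := [set j : 'I_n | [forall i : 'I_n, (i < j)%N ==> (Zc i != Zc j)]].

Lemma J_inj j k : j \in J -> k \in J -> Zc j = Zc k -> j = k.
Proof.
rewrite !inE => /forallP Jj /forallP Jk e.
case: (ltngtP j k) => [lt|lt|/val_inj //].
  by have := Jk j; rewrite lt e eqxx.
by have := Jj k; rewrite lt e eqxx.
Qed.

Lemma J_rep i : exists2 j, j \in J & Zc j = Zc i.
Proof.
case: (arg_minnP (fun j : 'I_n => val j) (P := fun j => Zc j == Zc i) (eqxx _)).
move=> j /eqP Zj minj; exists j => //.
rewrite inE; apply/forallP => i'; apply/implyP => lt; apply/negP => /eqP e.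
by have := minj i'; rewrite e Zj eqxx leqNgt lt => /(_ isT).
Qed.

Lemma eq_all_mod x y : x \in G -> y \in G ->
  (forall i, coset (K i) x = coset (K i) y) -> x = y.
Proof.
move=> Gx Gy e; apply/eqP; rewrite eq_mulgV1; apply/eqP/faithK.
  by rewrite groupM ?groupV.
move=> i; have Nx := subsetP (nKG' i) x Gx.
have Ny : y^-1 \in 'N(K i) by rewrite groupV; exact: (subsetP (nKG' i) y Gy).
apply: coset_idr; first by rewrite groupM.
rewrite morphM // morphV -?(groupV _ y) //.
apply/eqP; rewrite -eq_mulgV1; apply/eqP; exact: e i.
Qed.

Lemma mod_prod (r : 'I_n -> gT) i j0 : (forall j, j \in J -> r j \in Rc j) ->
  j0 \in J -> Zc j0 = Zc i ->
  coset (K i) (\prod_(j in J) r j) = coset (K i) (r j0).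
Proof.
move=> rR Jj0 ej0.
rewrite morph_prod; last first.
  by move=> j Jj; apply: (subsetP (nKG' i)); apply: (subsetP (sRG j)); exact: rR.
rewrite big_mkcond -(@big_rmcond _ _ _ _ _ (pred1 j0)); last first.
  move=> j /= nj; case: ifP => // Jj; apply: coset_id.
  apply: (subsetP (sRK (j := j) _)); last exact: rR.
  rewrite -ej0; apply/eqP => e; move/negP: nj; apply; apply/eqP.
  exact: J_inj.
by rewrite big_pred1_eq Jj0.
Qed.

Lemma gen_R : G \subset << \bigcup_(j in J) Rc j >>.
Proof.
apply/subsetP => x Gx.
have ex : forall j : 'I_n, exists y : gT, y \in Rc j /\ y^-1 * x \in Bc j.
  move=> j.
  have := subsetP (perf_split (R_normal j) (R_surj (erefl (Zc j)))) x Gx.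
  case/mulsgP => y b Ry Bb ->; exists y; split => //.
  by rewrite mulKg.
have [r hr] := fin_all_exists ex.
have -> : x = \prod_(j in J) r j.
  apply: eq_all_mod => //.
    by apply: group_prod => j _; apply: (subsetP (sRG j)); case: (hr j).
  move=> i; have [j0 Jj0 ej0] := J_rep i.
  rewrite (mod_prod _ Jj0 ej0); last by move=> j _; case: (hr j).
  case: (hr j0) => Rr Bb.
  have Gr : r j0 \in G := subsetP (sRG j0) _ Rr.
  rewrite -{1}(mulKVg (r j0) x) morphM; last 2 first.
  - exact: (subsetP (nKG' i)).
  - apply: (subsetP (nKG' i)); exact: (subsetP (normal_sub (B_normal j0))).
  have c1 : coset (K i) ((r j0)^-1 * x) = 1 := coset_id (subsetP (sBK (esym ej0)) _ Bb).
  by rewrite [X in _ * X = _]c1 mulg1.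
apply: group_prod => j Jj; apply: mem_gen; apply/bigcupP; exists j => //.
by case: (hr j).
Qed.

Lemma cprod_R : \big[cprod/1]_(j in J) Rc j = G.
Proof.
have /eqP -> : \big[cprod/1]_(j in J) Rc j == (\prod_(j in J) Rc j)%G.
  apply/bigcprodYP => i j Ji Jj nij; apply/commG1P/trivgP.
  apply/subsetP => x.
  have sub : [~: Rc i, Rc j] \subset Rc i :&: Rc j.
    apply: commg_subI; rewrite subsetI subxx /=.
      exact: subset_trans (sRG i) (normal_norm (R_normal j)).
    exact: subset_trans (sRG j) (normal_norm (R_normal i)).
  move/(subsetP sub)/setIP => [xi xj]; rewrite inE; apply/eqP.
  apply: (RR1 (j := i) (k := j)) => //; apply/eqP => e; move/negP: nij; apply.
  by apply/eqP; apply: J_inj.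
rewrite /= bigprodGE; apply/eqP; rewrite eqEsubset gen_R andbT gen_subG.
by apply/bigcupsP => j _; exact: sRG.
Qed.

Lemma RK_eq j : Rc j / K j = G / K j.
Proof.
apply/eqP; rewrite eqEsubset quotientS ?sRG //=.
by rewrite -(quotientMidr (K j) (Rc j)) quotientS // R_surj.
Qed.

Lemma perf_R j : [~: Rc j, Rc j] = Rc j.
Proof.
have sDR : [~: Rc j, Rc j] \subset Rc j by rewrite commg_subl normG.
have nRG := normal_norm (R_normal j).
have nDG : [~: Rc j, Rc j]%G <| G.
  by rewrite /normal (subset_trans sDR (sRG j)) normsR.
have nDK : [~: Rc j, Rc j] \subset 'N(K j).
  exact: subset_trans sDR (subset_trans (sRG j) (nKG' j)).
have sGD : G \subset [~: Rc j, Rc j] * K j.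
  rewrite (normC nDK) -quotientK // -sub_quotient_pre ?nKG' //.
  rewrite quotientR; try exact: subset_trans (sRG j) (nKG' j).
  by rewrite RK_eq -quotientR ?nKG' // perfG.
have sGDB := perf_split nDG sGD.
apply/eqP; rewrite eqEsubset sDR /=.
apply/subsetP => x Rx; have Gx := subsetP (sRG j) x Rx.
have /mulsgP[d b Dd Bb xe] := subsetP sGDB x Gx.
rewrite xe; suff -> : b = 1 by rewrite mulg1.
have Rx' : d * b \in Rc j by rewrite -xe.
apply: (RB1 (j := j)) => //.
have Rd := subsetP sDR _ Dd.
by rewrite -(groupMl _ Rd).
Qed.

Lemma ZR j : 'Z(Rc j) = Zc j :&: Rc j.
Proof.
have nRK : Rc j \subset 'N(K j) := subset_trans (sRG j) (nKG' j).
apply/eqP; rewrite eqEsubset; apply/andP; split.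
  rewrite subsetI center_sub andbT.
  rewrite -sub_quotient_pre; last exact: subset_trans (center_sub _) nRK.
  rewrite subsetI; apply/andP; split.
    exact: quotientS (subset_trans (center_sub _) (sRG j)).
  change ('Z(Rc j) / K j \subset 'C(G / K j)).
  rewrite -RK_eq quotient_cents2 //; last exact: subset_trans (center_sub _) nRK.
  have cZR : 'Z(Rc j) \subset 'C(Rc j) by exact: subsetIr.
  by rewrite (commG1P cZR) sub1G.
apply/subsetP => x /setIP[Zx Rx]; apply/centerP; split => // y Ry.
have Gx := subsetP (sRG j) x Rx; have Gy := subsetP (sRG j) y Ry.
apply/commgP/eqP; apply: faithK; first by rewrite groupR.
move=> i; case: (eqVneq (Zc i) (Zc j)) => h.
  by apply: (subsetP (commZ i)); apply: mem_commg => //; rewrite h.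
have Kx := subsetP (sRK h) x Rx.
rewrite /commg groupM ?groupV // memJ_norm //.
exact: (subsetP (nKG' i)).
Qed.

Lemma isoR j : Rc j / 'Z(Rc j) \isog (G / K j) / 'Z(G / K j).
Proof.
rewrite ZR.
have nRZ : Rc j \subset 'N(Zc j) := subset_trans (sRG j) (normal_norm (nZG j)).
apply: isog_trans (second_isog nRZ) _.
have e : Rc j / Zc j = G / Zc j.
  apply/eqP; rewrite eqEsubset quotientS ?sRG //=.
  rewrite -(quotientMidr (Zc j) (Rc j)) quotientS //.
  exact: subset_trans (R_surj (erefl (Zc j))) (mulgS _ (sKZ j)).
change (Rc j / Zc j \isog (G / K j) / 'Z(G / K j)).
rewrite e isog_sym.
have := third_isog (sKZ j) (nKG j) (nZG j).
by rewrite /Zc /= cosetpreK.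
Qed.

Lemma qsR j : quasisimple (Rc j).
Proof.
rewrite /quasisimple /perfect perf_R eqxx /=.
rewrite (isog_simple (isoR j)).
by case/andP: (qsK j).
Qed.

End Decomp.

Unset Implicit Arguments.
Set Strict Implicit.
Local Open Scope ring_scope.

Theorem mainTheorem6
  (gT : finGroupType) (G : {group gT}) (N n : nat)
  (Phi : mx_representation algC G N)
  (U : 'I_n -> 'M[algC]_N)
  (modU : forall i, mxmodule Phi (U i)) :
  perfect G ->
  mx_faithful Phi ->
  (* (a) Phi is the direct sum of the irreducible subrepresentations on U i *)
  mxdirect (\sum_(i < n) U i) ->
  (\sum_(i < n) U i == 1%:M)%MS ->
  (forall i, mxsimple Phi (U i)) ->
  (* (b) each image Phi_i(G) ~= G / ker Phi_i is quasisimple *)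
  (forall i, quasisimple (G / rker (submod_repr (modU i)))%g) ->
  (exists (J : {set 'I_n}) (R : 'I_n -> {group gT}),
      \big[cprod/1%g]_(j in J) R j = G /\
      forall j, j \in J ->
        quasisimple (R j) /\
        (R j / 'Z(R j))%g \isog
          ((G / rker (submod_repr (modU j))) / 'Z(G / rker (submod_repr (modU j))))%g)
  /\
  ((* (c) *)
   (forall g, g \in G -> \tr (Phi g) != 0) ->
   (* (d) *)
   (forall H : {group gT}, H \subset G -> quasisimple H ->
      forall X : {set 'I_n},
        (exists i0 : 'I_n, forall j, j \in X ->
            ~ mx_rsim (submod_repr (modU j)) (submod_repr (modU i0))) ->
        (forall i, i \in X -> forall g, g \in G ->
            exists2 h, h \in H & submod_repr (modU i) h = submod_repr (modU i) g) ->
        exists2 h, h \in H &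
          forall i, i \in X -> \tr (submod_repr (modU i) h) = 0) ->
   quasisimple G).
Proof.
move=> perfG faith dx sum1 simU qsU.
pose K i : {group gT} := [group of rker (submod_repr (modU i))].
have perfG' : [~: G, G]%g = G by exact/eqP.
have nKG : forall i, (K i <| G)%g by move=> i; exact: rker_normal.
have faithK : forall x, x \in G -> (forall i, x \in K i) -> x = 1%g.
  move=> x Gx Kx.
  suff : x \in rker Phi by move/(subsetP faith); rewrite inE => /eqP.
  apply/rkerP; split => //.
  case/andP: sum1 => _ /sub_sumsmxP[u eu].
  have eUi : forall i, U i *m Phi x = U i.
    move=> i; have := Kx i; rewrite /K /= rker_submod inE => /andP[_ /eqP //].
  rewrite -[Phi x]mul1mx {1}eu mulmx_suml.
  by under eq_bigr => i _ do rewrite -mulmxA eUi.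
have qsK : forall i, quasisimple (G / K i)%g by move=> i; exact: qsU.
split.
  exists (J G K), (Rc G K); split; first exact: cprod_R.
  move=> j _; split; first exact: qsR.
  exact: isoR.
move=> hc hd.
set JJ := J G K.
have Zeq : forall i k, gval (K i) = gval (K k) -> Zc G K i = Zc G K k.
  by move=> i k e; rewrite /Zc (group_inj e).
have contra : (forall j, j \in JJ -> exists2 k, k \in JJ & k != j) -> False.
  move=> oth.
  pose X j := [set i | Zc G K i == Zc G K j].
  have ex : forall j : 'I_n, exists h : gT, j \in JJ ->
      h \in Rc G K j /\ (forall i, i \in X j -> \tr (submod_repr (modU i) h) = 0).
    move=> j; case Jj: (j \in JJ); last by exists 1%g.
    have [k Jk nkj] := oth j Jj.
    have p1 : exists i0 : 'I_n, forall j', j' \in X j ->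
        ~ mx_rsim (submod_repr (modU j')) (submod_repr (modU i0)).
      exists k => j'; rewrite inE => /eqP ej' /rker_mx_rsim ek.
      have := Zeq j' k ek; rewrite ej' => ejk.
      by move/negP: nkj; apply; apply/eqP; apply: (J_inj Jk Jj (esym ejk)).
    have p2 : forall i, i \in X j -> forall g, g \in G ->
        exists2 h, h \in Rc G K j & submod_repr (modU i) h = submod_repr (modU i) g.
      move=> i; rewrite inE => /eqP eij g Gg.
      have /mulsgP[r kk Rr Kk eg] := subsetP (R_surj perfG' nKG qsK eij) g Gg.
      exists r => //.
      have Gr : r \in G := subsetP (sRG G K j) r Rr.
      have /rkerP[Gk ek] := Kk.
      by rewrite eg repr_mxM // ek mulmx1.
    have [h Hh tr0] := hd _ (sRG G K j) (qsR perfG' nKG faithK qsK j) (X j) p1 p2.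
    by exists h.
  have [h hh] := fin_all_exists ex.
  pose g := (\prod_(j in JJ) h j)%g.
  have hR : forall j, j \in JJ -> h j \in Rc G K j by move=> j Jj; case: (hh j Jj).
  have Gg : g \in G.
    by apply: group_prod => j Jj; exact: (subsetP (sRG G K j)) (hR j Jj).
  have := hc g Gg; apply/negP; rewrite negbK; apply/eqP.
  have m1 := mxmodule1 Phi.
  rewrite -(mxtrace_submod1 m1 (eqmx_refl _) Gg).
  rewrite -(mxtrace_dsum_mod modU m1 (eqmxP sum1) dx Gg).
  apply: big1 => i _.
  have [j0 Jj0 ej0] := J_rep G K i.
  have e := mod_prod nKG hR Jj0 ej0.
  have nK := normal_norm (nKG i).
  have Gh : h j0 \in G := subsetP (sRG G K j0) _ (hR j0 Jj0).
  have /rcoset_kercosetP : coset (K i) g = coset (K i) (h j0) := e.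
  case/(_ (subsetP nK _ Gg) (subsetP nK _ Gh))/rcosetP => kk Kk eg.
  have /rkerP[Gk ek] := Kk.
  rewrite eg repr_mxM // ek mul1mx.
  case: (hh j0 Jj0) => _ t; apply: t.
  by rewrite inE ej0.
case: (set_0Vmem JJ) => [J0 | [j0 Jj0]].
  by exfalso; apply: contra => j; rewrite J0 inE.
case: (boolP (JJ \subset [set j0])) => [sJ | nsJ].
  have eJ : JJ = [set j0] by apply/eqP; rewrite eqEsubset sJ sub1set Jj0.
  have := cprod_R perfG' nKG faithK qsK; rewrite -/JJ eJ big_set1 => e.
  rewrite -e; exact: (qsR perfG' nKG faithK qsK j0).
exfalso; apply: contra => j Jj.
case/subsetPn: nsJ => k Jk; rewrite inE => nk.
case: (eqVneq j j0) => [-> | nj]; first by exists k.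
by exists j0; rewrite // eq_sym.
Qed.
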